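(* Let $\gamma_k>0$, $k\in\mathcal{N}$, let $y(t)$ solve $\dot y_k=\gamma_kv_k(Q(y))$, and let $x(t)=Q(y(t))$. Assume each player's penalty function is decomposable, $h_k(x_k)=\sum_{\beta\in\mathcal{A}_k}\theta_k(x_{k\beta})$. If $\alpha,\beta\in\mathcal{A}_k$ with $\alpha\prec\beta$ (i.e. $v_{k\alpha}(x)<v_{k\beta}(x)$ for all $x\in\mathcal{X}$), then for all $t\ge0$ $$x_{k\alpha}(t)\le\phi_k(c_k-\gamma_k\delta_kt),$$ where $c_k$ is a constant depending only on the initial conditions, $\delta_k=\min\{v_{k\beta}(x)-v_{k\alpha}(x):x\in\mathcal{X}\}$, and $\phi_k(z)=0$ if $z\le\theta_k'(0^+)$, $\phi_k(z)=1$ if $z\ge\theta_k'(1^-)$, and $\phi_k(z)=(\theta_k')^{-1}(z)$ otherwise. In particular, if $\theta_k'(0)$ is finite, dominated strategies become extinct in finite time.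
   Context: Setting: finite game with players $\mathcal{N}$, action sets $\mathcal{A}_k$, mixed strategies $\mathcal{X}_k=\Delta(\mathcal{A}_k)$, $\mathcal{X}=\prod_k\mathcal{X}_k$, payoff vectors $v_k(x)=(u_k(\alpha;x_{-k}))_{\alpha\in\mathcal{A}_k}$ with $u_k$ multilinear expected payoffs. The kernel $\theta_k:[0,1]\to\mathbb{R}$ is continuous, strongly convex and smooth on $(0,1]$; then $h_k$ is a penalty function (continuous, smooth on relative interiors of faces, strongly convex) on $\mathcal{X}_k$ with choice map $Q_k(y_k)=\arg\max_{x_k\in\mathcal{X}_k}\{\langle y_k,x_k\rangle-h_k(x_k)\}$; $Q=(Q_k)_k$. $\theta_k'(0^+)$ and $\theta_k'(1^-)$ denote one-sided limits of $\theta_k'$ (possibly $-\infty$ at $0$). *)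

(* Defs.v *)
From HB Require Import structures.
From mathcomp Require Import all_boot all_order all_algebra.
From mathcomp Require Import all_classical all_reals all_analysis.
Set Implicit Arguments. Unset Strict Implicit. Unset Printing Implicit Defensive.
Import Order.TTheory GRing.Theory Num.Theory.
Import numFieldNormedType.Exports.
Local Open Scope classical_set_scope.
Local Open Scope ring_scope.

Section Game.
Variables (R : realType) (I : finType) (A : I -> finType).

Definition pure_profile := {dffun forall k : I, A k}.

Definition mixed := forall k : I, A k -> R.

Definition in_simplex (k : I) (xk : A k -> R) : Prop :=
  (forall a, 0 <= xk a) /\ \sum_(a : A k) xk a = 1.

Definition in_X (x : mixed) : Prop := forall k, in_simplex (x k).

(* v_{k alpha}(x) = u_k(alpha; x_{-k}), multilinear extension of the pure payoffs u *)
Definition payoff_vec (u : I -> pure_profile -> R) (k : I) (alpha : A k) (x : mixed) : R :=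
  \sum_(a : pure_profile | a k == alpha) u k a * \prod_(j | j != k) x j (a j).

Definition decomp_penalty (k : I) (theta : R -> R) (xk : A k -> R) : R :=
  \sum_(b : A k) theta (xk b).

(* xk is Q_k(yk) : a maximizer of <yk,xk> - h_k(xk) over the simplex *)
Definition is_choice (k : I) (theta : R -> R) (yk xk : A k -> R) : Prop :=
  in_simplex xk /\
  forall xk' : A k -> R, in_simplex xk' ->
    \sum_(a : A k) yk a * xk' a - decomp_penalty theta xk'
      <= \sum_(a : A k) yk a * xk a - decomp_penalty theta xk.

End Game.

Section Kernel.
Variable R : realType.

Definition strongly_convex01 (theta : R -> R) : Prop :=
  exists K : R, 0 < K /\
    forall a b l : R, 0 <= a <= 1 -> 0 <= b <= 1 -> 0 <= l <= 1 ->
      theta (l * a + (1 - l) * b)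
        <= l * theta a + (1 - l) * theta b - K / 2 * l * (1 - l) * (a - b) ^+ 2.

Definition penalty_kernel (theta : R -> R) : Prop :=
  [/\ {within `[0, 1], continuous theta},
      strongly_convex01 theta,
      (forall z : R, 0 < z < 1 -> derivable theta z 1),
      (forall z : R, 0 < z < 1 -> {for z, continuous ((derive1 theta))}) &
      cvg ((derive1 theta) z @[z --> 1^'-])].

Definition dtheta0 (theta : R -> R) : \bar R :=
  lim (((derive1 theta) z)%:E @[z --> 0^'+]).

Definition dtheta1 (theta : R -> R) : R := lim ((derive1 theta) z @[z --> 1^'-]).

Definition phi_ext (theta : R -> R) (z : R) : R :=
  if (z%:E <= dtheta0 theta)%E then 0
  else if dtheta1 theta <= z then 1
  else xget 0 [set w : R | 0 < w < 1 /\ (derive1 theta) w = z].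

End Kernel.

(* Main.v *)
Require Import Defs.
From HB Require Import structures.
From mathcomp Require Import all_boot all_order all_algebra.
From mathcomp Require Import all_classical all_reals all_analysis.
From mathcomp Require Import ring lra.
Import Order.TTheory GRing.Theory Num.Theory.
Import numFieldNormedType.Exports.
Local Open Scope classical_set_scope.
Local Open Scope ring_scope.

Section K.
Variable R : realType.
Implicit Types th : R -> R.

Lemma dq_cvg th a : derivable th a 1 ->
  (fun h => h^-1 * (th (h + a) - th a)) @ 0^' --> derive1 th a.
Proof.
move=> Hd; rewrite derive1E.
have -> : (fun h => h^-1 * (th (h + a) - th a)) =
   (fun h => h^-1 *: ((th \o shift a) (h *: 1) - th a)).
  by apply/funext => h /=; rewrite /shift /= [h *: 1]mulr1.
exact: Hd.
Qed.

Lemma tangent th a b : strongly_convex01 th -> 0 < a < 1 -> 0 <= b <= 1 ->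
  derivable th a 1 -> th a + derive1 th a * (b - a) <= th b.
Proof.
move=> [K [K0 HK]] /andP[a0 a1] /andP[b0 b1] Hd.
have key : forall h, 0 < h / (b - a) < 1 ->
    h^-1 * (th (h + a) - th a) * (b - a) <= th b - th a.
  move=> h /andP[l0 l1].
  set l := h / (b - a) in l0 l1.
  have ba : b - a != 0 by apply/eqP => e; move: l0; rewrite /l e invr0 mulr0 ltxx.
  have hl : h = l * (b - a) by rewrite /l -mulrA mulVf // mulr1.
  have l0' : l != 0 by rewrite gt_eqF.
  have := HK b a l; rewrite b0 b1 (ltW a0) (ltW a1) (ltW l0) (ltW l1) /=.
  move=> /(_ erefl erefl erefl).
  have -> : l * b + (1 - l) * a = h + a by rewrite hl; ring.
  have pos : 0 <= K / 2 * l * (1 - l) * (b - a) ^+ 2.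
    apply: mulr_ge0; last exact: sqr_ge0.
    apply: mulr_ge0; last by rewrite subr_ge0 ltW.
    by apply: mulr_ge0; [apply: divr_ge0; [exact: ltW|]|exact: ltW].
  move=> Hc.
  have Hc' : th (h + a) - th a <= l * (th b - th a) by lra.
  have -> : h^-1 * (th (h + a) - th a) * (b - a) = (th (h + a) - th a) / l.
    by rewrite hl; field; apply/andP.
  by rewrite ler_pdivrMr // mulrC.
have [ab|ba|<-] := ltgtP a b; last by rewrite subrr mulr0 addr0.
- have Hc := cvg_dnbhs_at_right (@dq_cvg th a Hd).
  have Hc2 : (fun h => h^-1 * (th (h + a) - th a) * (b - a)) @ 0^'+ --> derive1 th a * (b - a).
    exact: cvgMl.
  have : derive1 th a * (b - a) <= th b - th a.
    rewrite -(cvg_lim _ Hc2) //; apply: limr_le; first by apply/cvg_ex; eexists; exact: Hc2.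
    near=> h; apply: key.
    have h0 : 0 < h by near: h; exact: nbhs_right_gt.
    have hb : h < b - a by near: h; apply: nbhs_right_lt; rewrite subr_gt0.
    by rewrite divr_gt0 ?subr_gt0 //= ltr_pdivrMr ?subr_gt0 // mul1r.
  lra.
- have Hc := cvg_dnbhs_at_left (@dq_cvg th a Hd).
  have Hc2 : (fun h => h^-1 * (th (h + a) - th a) * (b - a)) @ 0^'- --> derive1 th a * (b - a).
    exact: cvgMl.
  have : derive1 th a * (b - a) <= th b - th a.
    rewrite -(cvg_lim _ Hc2) //; apply: limr_le; first by apply/cvg_ex; eexists; exact: Hc2.
    near=> h; apply: key.
    have h0 : h < 0 by near: h; exact: nbhs_left_lt.
    have hb : b - a < h by near: h; apply: nbhs_left_gt; rewrite subr_lt0.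
    rewrite -mulrNN -invrN; apply/andP; split.
      by rewrite divr_gt0 // ?oppr_gt0 // subr_lt0.
    by rewrite ltr_pdivrMr ?oppr_gt0 ?subr_lt0 // mul1r ltrN2.
  lra.
Unshelve. all: by end_near.
Qed.

Lemma D_mono th : strongly_convex01 th -> (forall z, 0 < z < 1 -> derivable th z 1) ->
  forall a b, 0 < a -> a <= b -> b < 1 -> derive1 th a <= derive1 th b.
Proof.
move=> Hc Hd a b a0 ab b1.
have a1 : a < 1 by apply: le_lt_trans b1.
have b0 : 0 < b by apply: lt_le_trans ab.
have H1 := @tangent th a b Hc (andb_true_intro (conj a0 a1))
  (andb_true_intro (conj (ltW b0) (ltW b1))) (Hd a (andb_true_intro (conj a0 a1))).
have H2 := @tangent th b a Hc (andb_true_intro (conj b0 b1))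
  (andb_true_intro (conj (ltW a0) (ltW a1))) (Hd b (andb_true_intro (conj b0 b1))).
move: H1 H2.
move: ab; rewrite le_eqVlt => /orP[/eqP->|ab] // H1 H2.
nra.
Qed.

Lemma D1_ge th : penalty_kernel th -> forall s, 0 < s < 1 -> derive1 th s <= dtheta1 th.
Proof.
move=> [_ Hc Hd _ Hl] s /andP[s0 s1].
apply: limr_ge => //.
near=> r; apply: D_mono => //.
by apply: ltW; near: r; exact: nbhs_left_gt.
Unshelve. all: by end_near.
Qed.

Lemma D1_lt th : penalty_kernel th -> forall z, z < dtheta1 th ->
  exists b, 0 < b < 1 /\ z < derive1 th b.
Proof.
move=> [Hct Hc Hd Hdc Hl] z zl.
have [//|H] := pselect (exists b, 0 < b < 1 /\ z < derive1 th b).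
suff : dtheta1 th <= z by rewrite leNgt zl.
apply: limr_le => //.
near=> r; rewrite leNgt; apply/negP => Hr; apply: H; exists r; split => //.
apply/andP; split.
  by near: r; apply: nbhs_left_gt.
by near: r; exact: nbhs_left_lt.
Unshelve. all: by end_near.
Qed.

Lemma D0_cvg th : penalty_kernel th -> cvg (((derive1 th) z)%:E @[z --> 0^'+]).
Proof.
move=> [Hct Hc Hd Hdc Hl].
apply: nondecreasing_at_right_is_cvge.
near=> x => p q; rewrite !in_itv /= => /andP[p0 px] /andP[q0 qx] pq.
rewrite lee_fin; apply: D_mono => //.
apply: lt_trans qx _; near: x; apply: nbhs_right_lt; exact: ltr01.
Unshelve. all: by end_near.
Qed.

Lemma D0_le th : penalty_kernel th -> forall s, 0 < s < 1 -> (dtheta0 th <= (derive1 th s)%:E)%E.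
Proof.
move=> P s /andP[s0 s1]; have := P => -[Hct Hc Hd Hdc Hl].
apply: lime_le; first exact: D0_cvg.
near=> r; rewrite lee_fin; apply: D_mono => //.
by apply: ltW; near: r; exact: nbhs_right_lt.
Unshelve. all: by end_near.
Qed.

Lemma D0_lt th : penalty_kernel th -> forall z, (dtheta0 th < z%:E)%E ->
  exists a, 0 < a < 1 /\ derive1 th a < z.
Proof.
move=> P z zl; have := P => -[Hct Hc Hd Hdc Hl].
have [//|H] := pselect (exists a, 0 < a < 1 /\ derive1 th a < z).
suff : (z%:E <= dtheta0 th)%E by rewrite leNgt zl.
apply: lime_ge; first exact: D0_cvg.
near=> r; rewrite lee_fin leNgt; apply/negP => Hr; apply: H; exists r; split => //.
apply/andP; split.
  by near: r; exact: nbhs_right_gt.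
by near: r; apply: nbhs_right_lt; exact: ltr01.
Unshelve. all: by end_near.
Qed.

Lemma phi_ge0 th z : 0 <= phi_ext th z.
Proof.
rewrite /phi_ext; case: ifP => // _; case: ifP => // _.
by case: xgetP => // w _ [/andP[w0 _] _]; exact: ltW.
Qed.

Lemma phi_bound th xa z : penalty_kernel th -> 0 < xa <= 1 ->
  (forall s, 0 < s < xa -> derive1 th s < z) -> xa <= phi_ext th z.
Proof.
move=> P /andP[xa0 xa1] Hs; have := P => -[Hct Hc Hd Hdc Hl].
rewrite /phi_ext; case: ifP => [Hz|Hz].
  have h2 : 0 < xa / 2 < xa by apply/andP; split; lra.
  have := Hs _ h2.
  have h2' : 0 < xa / 2 < 1.
    by apply/andP; split; lra.
  have := @D0_le th P _ h2'.
  move=> H1 H2; have : (z%:E <= (derive1 th (xa/2))%:E)%E by apply: le_trans Hz H1.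
  by rewrite lee_fin leNgt H2.
case: ifP => // Hz1.
have z0 : (dtheta0 th < z%:E)%E by rewrite ltNge Hz.
have z1 : z < dtheta1 th by rewrite ltNge Hz1.
have [a [/andP[a0 a1] Da]] := @D0_lt th P _ z0.
have [b [/andP[b0 b1] Db]] := @D1_lt th P _ z1.
have ab : a <= b.
  rewrite leNgt; apply/negP => ba.
  have := @D_mono th Hc Hd _ _ b0 (ltW ba) a1; rewrite leNgt.
  by rewrite (lt_trans Da Db).
have [c cab Dc] : exists2 c, c \in `[a, b] & derive1 th c = z.
  apply: IVT => //.
    apply: continuous_in_subspaceT => x /set_mem; rewrite /= in_itv /= => /andP[ax xb].
    apply: Hdc; rewrite (lt_le_trans a0 ax) /=; exact: le_lt_trans b1.
  apply/andP; split.
    by rewrite ge_min (ltW Da).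
  by rewrite le_max (ltW Db) orbT.
move: cab; rewrite in_itv /= => /andP[ac cb].
have Sne : exists w, 0 < w < 1 /\ derive1 th w = z.
  by exists c; rewrite (lt_le_trans a0 ac) (le_lt_trans cb b1).
case: xgetP => [w _ [/andP[w0 w1] Dw]|HN]; last by case: Sne => w /HN.
rewrite leNgt; apply/negP => wxa.
set s := (w + xa) / 2.
have ws : w < s by rewrite /s; lra.
have sxa : s < xa by rewrite /s; lra.
have := Hs s; rewrite (lt_trans w0 ws) sxa => /(_ erefl).
have := @D_mono th Hc Hd _ _ w0 (ltW ws) (lt_le_trans sxa xa1).
by rewrite Dw => H1 H2; move: (le_lt_trans H1 H2); rewrite ltxx.
Qed.


Lemma sum2 (T : finType) (al be : T) (f : T -> R) : al != be ->
  \sum_a f a = f al + f be + \sum_(a | (a != al) && (a != be)) f a.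
Proof.
move=> ab; rewrite (bigD1 al) //= (bigD1 be) /=; last by rewrite eq_sym.
by rewrite addrA.
Qed.

Lemma choice_bound (I : finType) (A : I -> finType) (k : I) th
  (yk xk : A k -> R) (al be : A k) s :
  penalty_kernel th -> is_choice th yk xk -> al != be -> 0 < s < xk al ->
  derive1 th s <= yk al - yk be + dtheta1 th.
Proof.
move=> P [[xpos xsum] Hopt] ab /andP[s0 sx].
have := P => -[Hct Hc Hd Hdc Hl].
set e := xk al - s.
have e0 : 0 < e by rewrite /e subr_gt0.
pose x' := fun a => if a == al then s else if a == be then xk be + e else xk a.
have rest : \sum_(a | (a != al) && (a != be)) x' a = \sum_(a | (a != al) && (a != be)) xk a.
  by apply: eq_bigr => a /andP[/negbTE H1 /negbTE H2]; rewrite /x' H1 H2.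
have rpos : 0 <= \sum_(a | (a != al) && (a != be)) xk a by apply: sumr_ge0 => a _.
have s2 := @sum2 _ al be xk ab.
have xbe0 := xpos be.
have x'al : x' al = s by rewrite /x' eqxx.
have x'be : x' be = xk be + e by rewrite /x' eq_sym (negbTE ab) eqxx.
have Hx' : in_simplex x'.
  split.
    move=> a; rewrite /x'; case: ifP => _; first exact: ltW.
    case: ifP => _ //; rewrite addr_ge0 //; exact: ltW.
  by rewrite (@sum2 _ al be x' ab) rest x'al x'be; rewrite xsum in s2; rewrite /e; lra.
have := Hopt x' Hx'.
rewrite /decomp_penalty (@sum2 _ al be (fun a => yk a * x' a) ab) (@sum2 _ al be (fun a => yk a * xk a) ab).
rewrite (@sum2 _ al be (fun a => th (x' a)) ab) (@sum2 _ al be (fun a => th (xk a)) ab).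
have -> : \sum_(a | (a != al) && (a != be)) yk a * x' a =
          \sum_(a | (a != al) && (a != be)) yk a * xk a.
  by apply: eq_bigr => a /andP[/negbTE H1 /negbTE H2]; rewrite /x' H1 H2.
have -> : \sum_(a | (a != al) && (a != be)) th (x' a) =
          \sum_(a | (a != al) && (a != be)) th (xk a).
  by apply: eq_bigr => a /andP[/negbTE H1 /negbTE H2]; rewrite /x' H1 H2.
rewrite x'al x'be => Hineq.
have xal1 : xk al + xk be <= 1 by rewrite xsum in s2; lra.
set p := xk be + e.
have p0 : 0 < p by rewrite /p; lra.
have p1 : p < 1 by rewrite /p /e; lra.
have s1 : s < 1 by lra.
have xal0 : 0 <= xk al by lra.
have xal1' : xk al <= 1 by lra.
have T1 := @tangent th s (xk al) Hc (andb_true_intro (conj s0 s1))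
  (andb_true_intro (conj xal0 xal1')) (Hd s (andb_true_intro (conj s0 s1))).
have xbe1 : xk be <= 1 by lra.
have T2 := @tangent th p (xk be) Hc (andb_true_intro (conj p0 p1))
  (andb_true_intro (conj xbe0 xbe1)) (Hd p (andb_true_intro (conj p0 p1))).
have Dp := @D1_ge th P p (andb_true_intro (conj p0 p1)).
have pe : xk be - p = - e by rewrite /p; ring.
have se : xk al - s = e by [].
rewrite pe se in T1 T2.
have Hfin : e * (derive1 th s - (yk al - yk be + derive1 th p)) <= 0.
  rewrite /p /e in Hineq T1 T2 *; nra.
have : derive1 th s <= yk al - yk be + derive1 th p.
  by rewrite -subr_le0; move: Hfin; rewrite pmulr_rle0.
lra.
Qed.

End K.

Theorem proposition4p2 (R : realType) (I : finType) (A : I -> finType)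
  (u : I -> pure_profile A -> R)
  (theta : forall k : I, R -> R)
  (gamma : I -> R)
  (y : forall k : I, A k -> R -> R)
  (x : R -> mixed R A) :
  (forall k, penalty_kernel (theta k)) ->
  (forall k, 0 < gamma k) ->
  (forall k (a : A k), {within `[0, +oo[, continuous (y k a)}) ->
  (forall k (a : A k) (t : R), 0 < t ->
      is_derive t 1 (y k a) (gamma k * payoff_vec u a (x t))) ->
  (forall t : R, 0 <= t -> forall k,
      is_choice (theta k) (fun a => y k a t) (x t k)) ->
  forall (k : I) (alpha beta : A k),
    (forall z : mixed R A, in_X z -> payoff_vec u alpha z < payoff_vec u beta z) ->
  forall delta : R,
    (exists2 z0 : mixed R A, in_X z0 &
        delta = payoff_vec u beta z0 - payoff_vec u alpha z0) ->
    (forall z : mixed R A, in_X z ->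
        delta <= payoff_vec u beta z - payoff_vec u alpha z) ->
  (exists c : R, forall t : R, 0 <= t ->
      x t k alpha <= phi_ext (theta k) (c - gamma k * delta * t)) /\
  (dtheta0 (theta k) \is a fin_num ->
      exists T : R, forall t : R, T <= t -> x t k alpha = 0).
Proof.
move=> HP Hg Hcont Hder Hch k al be Hdom delta [z0 Hz0 Hdz0] Hdel.
have ab : al != be.
  by apply/eqP => e; move: (Hdom z0 Hz0); rewrite e ltxx.
have delta0 : 0 < delta by rewrite Hdz0 subr_gt0; exact: Hdom.
have inX : forall t, 0 <= t -> in_X (x t) by move=> t t0 j; exact: (Hch t t0 j).1.
have g0 := Hg k.
pose f := fun t => y k al t - y k be t.
have Hf : forall t, 0 <= t -> f t <= f 0 - gamma k * delta * t.
  move=> t; rewrite le_eqVlt => /orP[/eqP <-|t0]; first by rewrite mulr0 subr0.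
  have [c /andP[] c0 ct Hmvt] : exists2 c, c \in `]0, t[ &
       f t - f 0 = (gamma k * payoff_vec u al (x c) - gamma k * payoff_vec u be (x c)) * (t - 0).
    apply: MVT => //.
      move=> c; rewrite in_itv /= => /andP[c0 _].
      exact: is_deriveB (Hder k al c c0) (Hder k be c c0).
    have sub : `[0, t] `<=` `[0, +oo[.
      by move=> r /=; rewrite !in_itv /= => /andP[-> _].
    have H1 := continuous_subspaceW sub (Hcont k al).
    have H2 := continuous_subspaceW sub (Hcont k be).
    by move=> r; apply: continuousB; [exact: H1|exact: H2].
  have := Hdel (x c) (inX c (ltW c0)).
  move: Hmvt; rewrite subr0 => Hmvt Hd.
  have : gamma k * delta * t <= gamma k * (payoff_vec u be (x c) - payoff_vec u al (x c)) * t.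
    by rewrite ler_pM2r // ler_pM2l.
  move=> Hm; rewrite /f in Hmvt *; move: Hmvt Hm; rewrite -/(f t) -/(f 0).
  move=> Hmvt Hm; have : f t - f 0 = - (gamma k * (payoff_vec u be (x c) - payoff_vec u al (x c)) * t).
    by rewrite Hmvt; ring.
  lra.
set c0 := f 0 + dtheta1 (theta k) + 1.
have main : forall t, 0 <= t -> x t k al <= phi_ext (theta k) (c0 - gamma k * delta * t).
  move=> t t0.
  have [[xpos xsum] _] := Hch t t0 k.
  have xa0 := xpos al.
  move: xa0; rewrite le_eqVlt => /orP[/eqP <-|xa0]; first exact: phi_ge0.
  have xa1 : x t k al <= 1.
    have := @sum2 R _ al be (x t k) ab; rewrite xsum.
    have : 0 <= \sum_(a | (a != al) && (a != be)) x t k a by apply: sumr_ge0 => a _.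
    have := xpos be; lra.
  apply: phi_bound; first exact: HP.
    by rewrite xa0 xa1.
  move=> s Hs.
  have := @choice_bound R I A k (theta k) (fun a => y k a t) (x t k) al be s (HP k) (Hch t t0 k) ab Hs.
  have := Hf t t0; rewrite /c0 /= => H1 H2. have Hft : f t = y k al t - y k be t by []. lra.
split; first by exists c0.
move=> /fineK Hfin.
set d := fine (dtheta0 (theta k)) in Hfin.
have gd : 0 < gamma k * delta by rewrite mulr_gt0.
exists (Num.max 0 ((c0 - d) / (gamma k * delta))) => t.
rewrite ge_max => /andP[t0 tT].
have Hz : c0 - gamma k * delta * t <= d.
  have : c0 - d <= gamma k * delta * t by rewrite -ler_pdivrMl // mulrC.
  lra.
have := main t t0.
rewrite /phi_ext -Hfin lee_fin Hz => H.
apply/eqP; rewrite eq_le H /=.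
by have [[xpos _] _] := Hch t t0 k.
Qed.
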